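(* Let $G$ be a connected graph on $n$ vertices with maximum degree $\Delta\ge1$. Then $G$ contains a forest $F$ and disjoint vertex sets $A_0,A_1\subseteq V(G)$ such that (i) $A_0\cup A_1$ is an independent set in $G$; (ii) $d_F(v)=d_G(v)$ for all $v\in A_0$; (iii) $d_F(v)\ge d_G(v)-1$ for all $v\in A_1$; (iv) $|A_0|+\frac12|A_1|\ge \gamma_\Delta n$, where \[\gamma_\Delta=\frac{1}{\Delta^2+\Delta+2}+\frac{3}{2(\Delta^2+2\Delta+3)}.\]
   Context: $d_F(v)$ and $d_G(v)$ denote the degree of $v$ in $F$ and in $G$ respectively. *)

(* Defs.v *)
From mathcomp Require Import all_boot all_order all_algebra.
Set Implicit Arguments. Unset Strict Implicit. Unset Printing Implicit Defensive.
Import GRing.Theory Num.Theory.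

Definition simple_graph (T : finType) (e : rel T) : Prop :=
  symmetric e /\ irreflexive e.

Definition deg (T : finType) (e : rel T) (v : T) : nat := #|[set y | e v y]|.

Definition maxdeg (T : finType) (e : rel T) : nat := \max_(v : T) deg e v.

Definition connected_graph (T : finType) (e : rel T) : Prop :=
  forall x y : T, connect e x y.

Definition subgraph (T : finType) (f g : rel T) : Prop :=
  forall x y, f x y -> g x y.

Definition remove_edge (T : finType) (f : rel T) (u v : T) : rel T :=
  fun x y => f x y && ~~ (((x == u) && (y == v)) || ((x == v) && (y == u))).

(* a forest: a simple graph in which no edge lies on a cycle, i.e. removing
   any edge uv disconnects u from v *)
Definition forest (T : finType) (f : rel T) : Prop :=
  simple_graph f /\
  forall u v, f u v -> ~~ connect (remove_edge f u v) u v.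

Definition independent (T : finType) (e : rel T) (A : {set T}) : Prop :=
  forall x y, x \in A -> y \in A -> ~~ e x y.

Definition gamma (D : nat) : rat :=
  (1 / (D ^ 2 + D + 2)%N%:R + 3 / (2 * (D ^ 2 + 2 * D + 3))%N%:R)%R.

(* Main.v *)
Require Import Defs.
From mathcomp Require Import all_boot all_order all_algebra.
From mathcomp Require Import zify ring lra.
From Stdlib Require Import Classical.
Import GRing.Theory Num.Theory.

Lemma card_sum (T : finType) (B : {set T}) (p : pred T) :
  #|[set y in B | p y]| = \sum_(y in B) (p y : nat).
Proof.
rewrite -sum1_card (eq_bigl (fun y => (y \in B) && p y)); last by move=> y; rewrite inE.
rewrite big_mkcondr /=; apply: eq_bigr => y _; by case: (p y).
Qed.

Lemma ex_max_nat (P : nat -> Prop) B : (exists n, P n) -> (forall n, P n -> n <= B) ->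
  exists n, P n /\ forall m, P m -> m <= n.
Proof.
move=> [n0 Pn0] bnd; apply: NNPP => H.
have H' : forall n, P n -> exists m, P m /\ n < m.
  move=> n Pn; apply: NNPP => H2; apply: H; exists n; split=> // m Pm.
  case: (leqP m n) => // lt; exfalso; apply: H2; by exists m.
have: forall k, exists n, P n /\ k <= n.
  elim=> [|k [n [Pn le]]]; first by exists n0.
  have [m [Pm lt]] := H' n Pn; exists m; split=> //; exact: leq_ltn_trans le lt.
move=> /(_ B.+1) [n [Pn le]]; have := bnd n Pn; lia.
Qed.

Lemma pred_step (T : finType) (c : rel T) u x : connect c u x -> x != u ->
  exists z, connect c u z /\ c z x.
Proof.
move=> /connectP [p pth ->]; elim/last_ind: p pth => [|p z _] /=; first by rewrite eqxx.
rewrite rcons_path last_rcons => /andP [pth cz] _; exists (last u p); split=> //.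
by apply/connectP; exists p.
Qed.

Lemma rank_mono (T : finType) (c : rel T) (r : T -> nat) u x :
  (forall a b, c a b -> r a < r b) -> connect c u x -> r u <= r x.
Proof.
move=> cr /connectP [p pth ->]; elim: p u pth => [|y p IH] u //= /andP [cuy pth].
exact: leq_trans (ltnW (cr _ _ cuy)) (IH _ pth).
Qed.

Arguments pred_step [T c u x].
Arguments rank_mono [T c r u x].
Lemma rem_sym (T : finType) (f : rel T) u v : symmetric f -> symmetric (remove_edge f u v).
Proof.
move=> fsym x y; rewrite /remove_edge fsym; congr (_ && ~~ _).
by rewrite orbC [(x == v) && _]andbC [(x == u) && _]andbC.
Qed.

Lemma rank_forest (T : finType) (f : rel T) (r : T -> nat) :
  symmetric f -> irreflexive f ->
  (forall x y, f x y -> r x != r y) ->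
  (forall x y z, f x y -> f x z -> r y < r x -> r z < r x -> y = z) ->
  forest f.
Proof.
move=> fsym firr rne runiq.
have main : forall u v, f u v -> r v < r u -> ~~ connect (remove_edge f u v) u v.
  move=> u v fuv ltvu.
  pose c := fun a b => f a b && (r a < r b).
  pose S := [pred x | connect c u x].
  have cr : forall a b, c a b -> r a < r b by move=> a b /andP [].
  have dir : forall x y, remove_edge f u v x y -> x \in S -> y \in S.
    move=> x y /andP [fxy nuv]; rewrite !inE => Sx.
    have := rne _ _ fxy; rewrite neq_ltn => /orP [lt|lt].
      apply: connect_trans Sx (connect1 _); by rewrite /c fxy lt.
    case: (eqVneq x u) => [exu|nxu].
      subst x; have eyv := runiq _ _ _ fxy fuv lt ltvu; subst y.
      by rewrite !eqxx /= in nuv.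
    have [z [Sz czx]] := pred_step Sx nxu.
    move: czx => /andP [fzx ltzx].
    have fxz : f x z by rewrite fsym.
    by rewrite (runiq _ _ _ fxy fxz lt ltzx).
  have cl : closed (remove_edge f u v) S.
    move=> x y e; apply/idP/idP; first exact: dir e.
    by apply: dir; rewrite rem_sym.
  apply/negP => /(closed_connect cl); rewrite !inE connect0 => /esym /(rank_mono cr).
  lia.
split; first by split.
move=> u v fuv; have := rne _ _ fuv; rewrite neq_ltn => /orP [lt|lt]; last exact: main.
have fvu : f v u by rewrite fsym.
have := main _ _ fvu lt; apply: contra => C.
have e : remove_edge f v u =2 remove_edge f u v.
  move=> x y; rewrite /remove_edge; congr (_ && ~~ _); by rewrite orbC.
by rewrite (eq_connect e) (sym_connect_sym (@rem_sym T f u v fsym)).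
Qed.

Definition NA (T : finType) (g : rel T) (A : {set T}) : {set T} :=
  [set y | [exists a in A, g y a]].
Arguments NA [T] g A.
Definition free (T : finType) (g : rel T) (A : {set T}) : {set T} :=
  ~: (A :|: NA g A).
Arguments free [T] g A.

Record valid (T : finType) (g : rel T) (A0 A1 : {set T}) (f : rel T) (r : T -> nat) : Prop :=
  Valid {
    v_sym : symmetric f;
    v_sub : subgraph f g;
    v_touch : forall x y, f x y -> (x \in A0 :|: A1) || (y \in A0 :|: A1);
    v_rne : forall x y, f x y -> r x != r y;
    v_runiq : forall x y z, f x y -> f x z -> r y < r x -> r z < r x -> y = z;
    v_disj : [disjoint A0 & A1];
    v_ind : independent g (A0 :|: A1);
    v_A0 : forall v y, v \in A0 -> g v y -> f v y;
    v_A1 : forall v, v \in A1 -> exists d, forall y, g v y -> y != d -> f v y }.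
Arguments valid [T] g A0 A1 f r.
Arguments v_sym [T g A0 A1 f r].
Arguments v_sub [T g A0 A1 f r].
Arguments v_touch [T g A0 A1 f r].
Arguments v_rne [T g A0 A1 f r].
Arguments v_runiq [T g A0 A1 f r].
Arguments v_disj [T g A0 A1 f r].
Arguments v_ind [T g A0 A1 f r].
Arguments v_A0 [T g A0 A1 f r].
Arguments v_A1 [T g A0 A1 f r].

Lemma core (T : finType) (g f : rel T) (r : T -> nat) (A : {set T}) (w d : T) :
  symmetric g -> irreflexive g -> symmetric f -> subgraph f g ->
  (forall x y, f x y -> (x \in A) || (y \in A)) ->
  (forall x y, f x y -> r x != r y) ->
  (forall x y z, f x y -> f x z -> r y < r x -> r z < r x -> y = z) ->
  w \in free g A ->
  (forall y1 y2, g w y1 -> g w y2 -> y1 != d -> y2 != d ->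
     y1 \in NA g A -> y2 \in NA g A -> y1 = y2) ->
  exists f' r',
  [/\ symmetric f', subgraph f' g,
      (forall x y, f' x y -> (x \in w |: A) || (y \in w |: A)),
      (forall x y, f' x y -> r' x != r' y) &
      (forall x y z, f' x y -> f' x z -> r' y < r' x -> r' z < r' x -> y = z)] /\
  (forall x y, f x y -> f' x y) /\ (forall y, g w y -> y != d -> f' w y).
Proof.
move=> gsym girr fsym fsub ftouch rne runiq wfree uniq1.
have wfree' := wfree.
move: wfree; rewrite /free !inE negb_or => /andP [wA wNA].
have wnadj : forall a, a \in A -> g w a = false.
  move=> a aA; apply/negP => gwa; move/negP: wNA; apply.
  by apply/existsP; exists a; rewrite aA.
have oldnf : forall x y, f x y -> (x \in A) || (x \in NA g A).
  move=> x y fxy; case/orP: (ftouch _ _ fxy) => [->//|yA].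
  by rewrite inE; apply/orP; right; apply/existsP; exists y; rewrite yA fsub.
have oldw : forall x y, f x y -> x != w.
  move=> x y /oldnf; apply: contraL => /eqP ->; move: wfree'; by rewrite /free inE in_setU.
pose K y := g w y && (y != d).
pose f' := fun x y => f x y || (x == w) && K y || (y == w) && K x.
pose M := (\max_(v : T) r v).+1.
have rM : forall v, r v < M by move=> v; rewrite ltnS leq_bigmax.
pose r' := fun v => if v == w then M else if g w v && (v \notin NA g A) then M.+1 else r v.
have oldr : forall x y, f x y -> r' x = r x.
  move=> x y fxy; rewrite /r' (negbTE (oldw _ _ fxy)).
  case/orP: (oldnf _ _ fxy) => [xA|xN]; first by rewrite wnadj.
  by rewrite xN andbF.
have Kw : K w = false by rewrite /K girr.
have wy : forall y, K y -> r' w != r' y /\ y != w.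
  move=> y Ky; have yw : y != w by apply: contraTneq Ky => ->; rewrite Kw.
  split=> //; rewrite /r' eqxx (negbTE yw).
  case: ifP => _; first by rewrite ltn_eqF.
  by rewrite gtn_eqF.
exists f', r'; split; [split|split].
- move=> x y; rewrite /f' fsym -!orbA; congr (_ || _); exact: orbC.
- move=> x y; rewrite /f' => /orP [/orP [/fsub //|/andP [/eqP -> /andP []//]]|].
  by move=> /andP [/eqP -> /andP [gwx _]]; rewrite gsym.
- move=> x y; rewrite /f' => /orP [/orP [fxy|/andP [/eqP -> _]]|/andP [/eqP -> _]].
  + by case/orP: (ftouch _ _ fxy) => H; rewrite !inE H ?orbT.
  + by rewrite !inE eqxx.
  + by rewrite !inE eqxx orbT.
- move=> x y; rewrite /f' => /orP [/orP [fxy|/andP [/eqP -> Ky]]|/andP [/eqP -> Kx]].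
  + have fyx : f y x by rewrite fsym.
    by rewrite (oldr _ _ fxy) (oldr _ _ fyx) rne.
  + by case: (wy _ Ky).
  + by rewrite eq_sym; case: (wy _ Kx).
- have fw : forall y, f' w y -> K y.
    move=> y; rewrite /f' => /orP [/orP [fwy|/andP [_ ->]//]|/andP [_]].
      by have := oldw _ _ fwy; rewrite eqxx.
    by rewrite Kw.
  move=> x y z fxy fxz lty ltz.
  case: (eqVneq x w) => [exw|nxw].
    subst x; move: (fw _ fxy) (fw _ fxz) lty ltz => /andP [gy dy] /andP [gz dz].
    rewrite /r' eqxx.
    have yw : y != w by apply: contraTneq gy => ->; rewrite girr.
    have zw : z != w by apply: contraTneq gz => ->; rewrite girr.
    rewrite (negbTE yw) (negbTE zw) gy gz /=.
    case: ifP => yN; first by rewrite ltnNge leqnSn.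
    case: ifP => zN; first by move=> _; rewrite ltnNge leqnSn.
    move=> _ _; apply: uniq1 => //; by apply/negbFE.
  case: (boolP (g w x && (x \notin NA g A))) => [/andP [gwx xN]|hx].
    have nf : forall y, f' x y -> y = w.
      move=> y'; rewrite /f' (negbTE nxw) /= orbF => /orP [fxy'|/andP [/eqP -> //]].
      case/orP: (oldnf _ _ fxy') => [xA|]; last by rewrite (negbTE xN).
      by rewrite wnadj in gwx.
    by rewrite (nf _ fxy) (nf _ fxz).
  have rx : r' x = r x by rewrite /r' (negbTE nxw) (negbTE hx).
  have ol : forall y, f' x y -> r' y < r' x -> f x y.
    move=> y'; rewrite /f' (negbTE nxw) /= orbF => /orP [//|/andP [/eqP -> _]].
    by rewrite rx /r' eqxx ltnNge ltnW.
  have fxy' := ol _ fxy lty; have fxz' := ol _ fxz ltz.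
  have fyx : f y x by rewrite fsym.
  have fzx : f z x by rewrite fsym.
  move: lty ltz; rewrite rx (oldr _ _ fyx) (oldr _ _ fzx); exact: runiq.
- by move=> x y fxy; rewrite /f' fxy.
- by move=> y gy dy; rewrite /f' eqxx /K gy dy orbT.
Qed.

Arguments core [T g f r A w d].

Lemma ext_gen (T : finType) (g : rel T) A0 A1 f r w d :
  symmetric g -> irreflexive g -> valid g A0 A1 f r -> w \in free g (A0 :|: A1) ->
  (forall y1 y2, g w y1 -> g w y2 -> y1 != d -> y2 != d ->
     y1 \in NA g (A0 :|: A1) -> y2 \in NA g (A0 :|: A1) -> y1 = y2) ->
  exists f' r',
  [/\ symmetric f', subgraph f' g,
      (forall x y, f' x y -> (x \in w |: (A0 :|: A1)) || (y \in w |: (A0 :|: A1))),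
      (forall x y, f' x y -> r' x != r' y) &
      (forall x y z, f' x y -> f' x z -> r' y < r' x -> r' z < r' x -> y = z)] /\
  (forall x y, f x y -> f' x y) /\ (forall y, g w y -> y != d -> f' w y).
Proof.
move=> gsym girr V wf U; exact: (core gsym girr (v_sym V) (v_sub V) (v_touch V) (v_rne V) (v_runiq V) wf U).
Qed.

Arguments ext_gen [T g A0 A1 f r] w [d].

Lemma free_facts (T : finType) (g : rel T) A w :
  w \in free g A -> w \notin A /\ forall a, a \in A -> ~~ g w a.
Proof.
rewrite /free !inE negb_or => /andP [-> wN]; split=> // a aA; apply: contra wN => gwa.
by apply/existsP; exists a; rewrite aA.
Qed.

Arguments free_facts [T g A w].

Lemma ind_add (T : finType) (g : rel T) A w :
  symmetric g -> irreflexive g -> independent g A -> w \in free g A ->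
  independent g (w |: A).
Proof.
move=> gsym girr ind /free_facts [wA wadj] x y; rewrite !inE.
case/orP=> [/eqP ->|xA]; case/orP=> [/eqP ->|yA].
- by rewrite girr.
- exact: wadj.
- by rewrite gsym wadj.
- exact: ind.
Qed.

Lemma ext0 (T : finType) (g : rel T) A0 A1 f r w :
  symmetric g -> irreflexive g -> valid g A0 A1 f r -> w \in free g (A0 :|: A1) ->
  (forall y1 y2, g w y1 -> g w y2 ->
     y1 \in NA g (A0 :|: A1) -> y2 \in NA g (A0 :|: A1) -> y1 = y2) ->
  exists f' r', valid g (w |: A0) A1 f' r'.
Proof.
move=> gsym girr V wf U.
have [f' [r' [[s1 s2 s3 s4 s5] [s6 s7]]]] := ext_gen w (d:=w) gsym girr V wf (fun y1 y2 a b _ _ => U y1 y2 a b).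
have [wA _] := free_facts wf.
exists f', r'; split=> //.
- by move=> x y; rewrite -setUA; exact: s3.
- rewrite disjoint_subset; apply/subsetP => x; rewrite !inE => /orP [/eqP ->|xA0].
    by apply: contra wA; rewrite inE => ->; rewrite orbT.
  by rewrite (disjointFr (v_disj V) xA0).
- rewrite -setUA; apply: ind_add => //; exact: v_ind V.
- move=> v y; rewrite in_setU1 => /orP [/eqP ->|vA] gvy; last exact/s6/(v_A0 V).
  apply: s7 => //; apply: contraTneq gvy => ->; by rewrite girr.
- move=> v vA; have [d Hd] := v_A1 V v vA; exists d => y gy yd; exact/s6/Hd.
Qed.

Lemma ext1 (T : finType) (g : rel T) A0 A1 f r w d :
  symmetric g -> irreflexive g -> valid g A0 A1 f r -> w \in free g (A0 :|: A1) ->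
  (forall y1 y2, g w y1 -> g w y2 -> y1 != d -> y2 != d ->
     y1 \in NA g (A0 :|: A1) -> y2 \in NA g (A0 :|: A1) -> y1 = y2) ->
  exists f' r', valid g A0 (w |: A1) f' r'.
Proof.
move=> gsym girr V wf U.
have [f' [r' [[s1 s2 s3 s4 s5] [s6 s7]]]] := ext_gen w gsym girr V wf U.
have [wA _] := free_facts wf.
exists f', r'; split=> //.
- by move=> x y; rewrite setUCA; exact: s3.
- rewrite disjoint_subset; apply/subsetP => x xA0.
  rewrite !inE negb_or (disjointFr (v_disj V) xA0) andbT.
  apply/eqP => exw; subst x; move/negP: wA; apply; by rewrite inE xA0.
- rewrite setUCA; apply: ind_add => //; exact: v_ind V.
- move=> v y vA gvy; exact/s6/(v_A0 V).
- move=> v; rewrite in_setU1 => /orP [/eqP ->|vA]; first by exists d.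
  have [d' Hd] := v_A1 V v vA; exists d' => y gy yd; exact/s6/Hd.
Qed.

Lemma count_bound (T : finType) (g : rel T) (A : {set T}) (D k : nat) :
  symmetric g -> (forall v, deg g v <= D) ->
  (forall w, w \in free g A -> k <= #|[set y in NA g A | g w y]|) ->
  k * #|T| <= #|A| * (k + D * (k + (D - 1))).
Proof.
move=> gsym hD hk.
have h1 : #|T| <= #|A| + #|NA g A| + #|free g A|.
  by rewrite -(cardsC (A :|: NA g A)) /free leq_add2r cardsU leq_subr.
have hF : k * #|free g A| <= #|NA g A| * (D - 1).
  rewrite mulnC -sum_nat_const.
  apply: (@leq_trans (\sum_(w in free g A) \sum_(y in NA g A) (g w y : nat))).
    by apply: leq_sum => w wF; rewrite -card_sum hk.
  rewrite (exchange_big) /= -sum_nat_const; apply: leq_sum => y yN.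
  rewrite -(@card_sum _ _ (fun w => g w y)).
  move: (yN); rewrite inE => /existsP [a /andP [aA gya]].
  have aF : a \notin [set w in free g A | g w y].
    by rewrite inE /free in_setC in_setU aA.
  have := subset_leq_card (_ : a |: [set w in free g A | g w y] \subset [set w | g y w]).
  rewrite cardsU1 aF => /(_ _) H.
  have : #|[set w | g y w]| <= D by exact: hD.
  have H' : (1 + #|[set w in free g A | g w y]| <= #|[set w | g y w]|).
    apply: H; apply/subsetP => x; rewrite !inE => /orP [/eqP ->//|/andP [_]].
    by rewrite gsym.
  lia.
have hN : #|NA g A| <= #|A| * D.
  rewrite -sum1_card -sum_nat_const.
  apply: (@leq_trans (\sum_(y in NA g A) \sum_(a in A) (g y a : nat))).
    apply: leq_sum => y yN; rewrite -card_sum card_gt0.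
    move: yN; rewrite inE => /existsP [a /andP [aA gya]].
    by apply/set0Pn; exists a; rewrite inE aA gya.
  rewrite exchange_big /=; apply: leq_sum => a aA.
  rewrite -(@card_sum _ _ (fun y => g y a)).
  apply: leq_trans (hD a); apply: subset_leq_card; apply/subsetP => y.
  by rewrite !inE gsym => /andP [].
nia.
Qed.

Arguments ext0 [T g A0 A1 f r w].
Arguments ext1 [T g A0 A1 f r w d].
Arguments count_bound [T g A D k].

Local Open Scope ring_scope.

Lemma final_ineq (n a b c1 c2 : rat) : 0 < c1 -> 0 < c2 -> 2 * n <= a * c1 ->
  3 * n <= (a + b) * c2 -> (1 / c1 + 3 / (2 * c2)) * n <= a + b / 2.
Proof.
move=> h1 h2 e1 e2.
have f1 : n / c1 <= a / 2 by rewrite ler_pdivrMr //; nra.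
have f2 : 3 * n / (2 * c2) <= (a + b) / 2.
  rewrite ler_pdivrMr ?mulr_gt0 //; nra.
have -> : (1 / c1 + 3 / (2 * c2)) * n = n / c1 + 3 * n / (2 * c2).
  field; apply/andP; split; lra.
lra.
Qed.

Lemma valid0 (T : finType) (g : rel T) : valid g set0 set0 (fun _ _ => false) (fun _ => 0%N).
Proof.
split=> //.
- by rewrite -setI_eq0 setI0.
- by move=> x y; rewrite setU0 inE.
- by move=> v y; rewrite inE.
- by move=> v; rewrite inE.
Qed.

Theorem lemma5p2 (T : finType) (g : rel T) :
  simple_graph g -> connected_graph g -> (1 <= maxdeg g)%N ->
  exists (f : rel T) (A0 A1 : {set T}),
    [/\ forest f, subgraph f g, [disjoint A0 & A1] &
     [/\ independent g (A0 :|: A1),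
        (forall v, v \in A0 -> deg f v = deg g v),
        (forall v, v \in A1 -> (deg g v).-1 <= deg f v)%N &
        gamma (maxdeg g) * #|T|%:R <= #|A0|%:R + #|A1|%:R / 2 :> rat]].
Proof.
move=> [gsym girr] _ D1.
have hD : forall v, (deg g v <= maxdeg g)%N by move=> v; exact: (leq_bigmax (F := deg g) v).
have [n1 [[A0 [f1 [r1 [V1 c1]]]] max1]] :
  exists n, (exists A0 f r, valid g A0 set0 f r /\ #|A0| = n) /\
    forall m, (exists A0 f r, valid g A0 set0 f r /\ #|A0| = m) -> (m <= n)%N.
  apply: ex_max_nat; first by exists 0%N, set0, (fun _ _ => false), (fun _ => 0%N); rewrite cards0; split=> //; exact: valid0.
  by move=> n [A [f [r [_ <-]]]]; exact: max_card.
have cl1 : forall w, w \in free g A0 -> (2 <= #|[set y in NA g A0 | g w y]|)%N.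
  move=> w wf; rewrite leqNgt; apply/negP => /card_le1_eqP lt2.
  have wf' : w \in free g (A0 :|: set0) by rewrite setU0.
  have U : forall y1 y2, g w y1 -> g w y2 ->
     y1 \in NA g (A0 :|: set0) -> y2 \in NA g (A0 :|: set0) -> y1 = y2.
    move=> y1 y2 g1 g2; rewrite setU0 => n1' n2'; apply/esym/lt2; by rewrite inE ?n1' ?n2' ?g1 ?g2.
  have [f' [r' V']] := ext0 gsym girr V1 wf' U.
  have [wA _] := free_facts wf'.
  have := max1 #|w |: A0| (ex_intro _ _ (ex_intro _ _ (ex_intro _ _ (conj V' erefl)))).
  rewrite cardsU1 c1; move: wA; rewrite setU0 => /negPf ->; by rewrite ltnn.
have count1 := count_bound gsym hD cl1.
have [n2 [[A1 [f2 [r2 [V2 c2]]]] max2]] :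
  exists n, (exists A1 f r, valid g A0 A1 f r /\ #|A1| = n) /\
    forall m, (exists A1 f r, valid g A0 A1 f r /\ #|A1| = m) -> (m <= n)%N.
  apply: ex_max_nat; first by exists 0%N, set0, f1, r1; rewrite cards0.
  by move=> n [A [f [r [_ <-]]]]; exact: max_card.
have cl2 : forall w, w \in free g (A0 :|: A1) ->
    (3 <= #|[set y in NA g (A0 :|: A1) | g w y]|)%N.
  move=> w wf; rewrite leqNgt; apply/negP => lt3.
  set S := [set y in NA g (A0 :|: A1) | g w y] in lt3.
  have [d U] : exists d, forall y1 y2, g w y1 -> g w y2 -> y1 != d -> y2 != d ->
     y1 \in NA g (A0 :|: A1) -> y2 \in NA g (A0 :|: A1) -> y1 = y2.
    case: (set_0Vmem S) => [S0|[d dS]].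
      exists w => y1 y2 g1 _ _ _ n1' _.
      have : y1 \in S by rewrite inE n1' g1.
      by rewrite S0 inE.
    exists d => y1 y2 g1 g2 d1 d2 n1' n2'.
    have : (#|S :\ d| <= 1)%N by move: lt3; rewrite (cardsD1 d S) dS.
    move=> /card_le1_eqP H; apply/esym/H; by rewrite in_setD1 ?d1 ?d2 /S inE ?n1' ?n2' ?g1 ?g2.
  have [f' [r' V']] := ext1 gsym girr V2 wf U.
  have [wA _] := free_facts wf.
  have := max2 #|w |: A1| (ex_intro _ _ (ex_intro _ _ (ex_intro _ _ (conj V' erefl)))).
  have wA1 : w \notin A1 by apply: contra wA; rewrite inE => ->; rewrite orbT.
  by rewrite cardsU1 c2 wA1 ltnn.
have count2 := count_bound gsym hD cl2.
exists f2, A0, A1; split.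
- apply: (@rank_forest T f2 r2 (v_sym V2) _ (v_rne V2) (v_runiq V2)).
  by move=> x; apply/negP => /(v_sub V2); rewrite girr.
- exact: v_sub V2.
- exact: v_disj V2.
split.
- exact: v_ind V2.
- move=> v vA; rewrite /deg; apply: eq_card => y; rewrite !inE.
  apply/idP/idP => [/(v_sub V2)//|]; exact: v_A0 V2 v y vA.
- move=> v vA; have [d Hd] := v_A1 V2 v vA.
  have : (#|[set y | g v y]| <= #|d |: [set y | f2 v y]|)%N.
    apply: subset_leq_card; apply/subsetP => y; rewrite !inE => gy.
    case: (eqVneq y d) => //= yd; exact: Hd.
  rewrite /deg cardsU1; lia.
- have hU : (#|A0 :|: A1| <= #|A0| + #|A1|)%N by rewrite cardsU leq_subr.
  move: D1 count1 count2 hU; rewrite /gamma.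
  set D := maxdeg g; set n := #|T|; set a := #|A0|; set b := #|A1|; set u := #|A0 :|: A1|.
  move=> D1 e1 e2 hU.
  have e1' : (2 * n <= a * (D ^ 2 + D + 2))%N.
    apply: leq_trans e1 _; rewrite leq_mul2l; apply/orP; right.
    rewrite expnS expn1; nia.
  have e2' : (3 * n <= (a + b) * (D ^ 2 + 2 * D + 3))%N.
    apply: leq_trans e2 _; apply: leq_mul => //.
    rewrite expnS expn1; nia.
  rewrite natrM; apply: final_ineq; rewrite ?ltr0n ?addn_gt0 ?orbT //.
  + by move: e1'; rewrite -(ler_nat rat) !natrM.
  + by move: e2'; rewrite -(ler_nat rat) !natrM natrD.
Qed.
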